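(* Let $K$ be a commutative domain, $n\in\mathbb{N}_*$, $B$ a polynomial $K$-algebra in $n$ indeterminates, and $A$ the $K$-subalgebra of $B$ generated by $n$ elements $F_1,\dots,F_n\in B$ that are algebraically independent over $K$. Then the separable degree $[B_*^{-1}B:A_*^{-1}A]_s$ of the field extension $A_*^{-1}A\subset B_*^{-1}B$ is at most $\prod_{1\le i\le n}\deg F_i$.
   Context: For a domain $R$, $R_*=R\setminus\{0\}$ and $R_*^{-1}R$ denotes its field of fractions; $\mathbb{N}_*=\mathbb{N}\setminus\{0\}$. $[L:M]_s$ denotes the separable degree of a field extension $M\subset L$. *)

(* Defs.v *)
From HB Require Import structures.
From mathcomp Require Import all_boot all_order all_algebra.
From mathcomp Require Import all_field.
From mathcomp.multinomials Require Import mpoly.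
Set Implicit Arguments. Unset Strict Implicit. Unset Printing Implicit Defensive.
Import Order.TTheory GRing.Theory Num.Theory.
Local Open Scope ring_scope.

Notation fracB K n := {fraction {mpoly K[n]}}.

Definition alg_indep (K : idomainType) (n : nat) (F : n.-tuple {mpoly K[n]}) :=
  forall P : {mpoly K[n]}, P \mPo F = 0 -> P = 0.

Definition in_subalg (K : idomainType) (n : nat) (F : n.-tuple {mpoly K[n]})
  (b : {mpoly K[n]}) : Prop := exists P : {mpoly K[n]}, b = P \mPo F.

Definition in_fracA (K : idomainType) (n : nat) (F : n.-tuple {mpoly K[n]})
  (z : fracB K n) : Prop :=
  exists a b : {mpoly K[n]}, [/\ in_subalg F a, in_subalg F b, b != 0 &
    z = (tofrac a) / (tofrac b)].

Definition separable_over (L : fieldType) (M : L -> Prop) (x : L) : Prop :=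
  exists p : {poly L}, [/\ forall i, M p`_i, p != 0, root p x & separable_poly p].

Definition lin_indep_over (L : fieldType) (M : L -> Prop) (m : nat) (x : 'I_m -> L) :=
  forall c : 'I_m -> L, (forall i, M (c i)) ->
    \sum_(i < m) c i * x i = 0 -> forall i, c i = 0.

(* [L : M]_s <= D : the separable closure of M in L has dimension <= D over M,
   i.e. every M-linearly independent family of elements of L that are
   separable over M has at most D members. *)
Definition sep_degree_le (L : fieldType) (M : L -> Prop) (D : nat) : Prop :=
  forall (m : nat) (x : 'I_m -> L), (forall i, separable_over M (x i)) ->
    lin_indep_over M x -> (m <= D)%N.

(* total degree of a multivariate polynomial (msize p = 1 + deg p) *)
Definition tdeg (K : idomainType) (n : nat) (p : {mpoly K[n]}) : nat := (msize p).-1.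

(* Main.v *)
Require Import Defs.
From HB Require Import structures.
From mathcomp Require Import all_boot all_order all_algebra.
From mathcomp Require Import all_field.
From mathcomp.multinomials Require Import mpoly.
From mathcomp Require Import zify.
Set Implicit Arguments. Unset Strict Implicit. Unset Printing Implicit Defensive.
Import Order.TTheory GRing.Theory Num.Theory.
Local Open Scope ring_scope.

Local Close Scope ring_scope.
Definition box n s := {ffun 'I_n -> 'I_s.+1}.
Definition Nset n s : pred (box n s) := fun a => (\sum_i a i <= s)%N.
Definition Sw n (d : 'I_n -> nat) s : pred (box n s) := fun b => (\sum_i d i * b i <= s)%N.
Arguments Nset : clear implicits.
Arguments Sw : clear implicits.


Lemma block n (d : 'I_n -> nat) s : (forall i, 0 < d i)%N ->
  (#|Nset n s| <= (\prod_i d i) * #|Sw n d s|)%N.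
Proof.
move=> hd.
pose R := {dffun forall i : 'I_n, 'I_(d i)}.
have cR : #|R| = (\prod_i d i)%N.
  by rewrite card_dep_ffun foldrE big_map big_enum /=; apply: eq_bigr => i _; rewrite card_ord.
pose phi (a : box n s) : box n s := [ffun i => inord (a i %/ d i)].
pose r (a : box n s) : R := [ffun i => Ordinal (ltn_pmod (a i) (hd i))].
have phiE a i : (phi a i : nat) = a i %/ d i.
  rewrite ffunE inordK // ltnS; apply: leq_trans (leq_div _ _) _.
  by rewrite -ltnS.
pose g a := (phi a, r a).
have ginj : {in Nset n s &, injective g}.
  move=> a1 a2 _ _ [] /ffunP h1 /ffunP h2; apply/ffunP => i; apply: val_inj => /=.
  have e1 := congr1 val (h1 i); rewrite /= !phiE in e1.
  have e2 := congr1 val (h2 i); rewrite /= !ffunE /= in e2.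
  by rewrite (divn_eq (a1 i) (d i)) (divn_eq (a2 i) (d i)) e1 e2.
have -> : #|Nset n s| = #|[set a | Nset n s a]| by rewrite cardsE.
rewrite -(card_in_imset (f := g)); last by move=> a1 a2; rewrite !inE; exact: ginj.
have sub : g @: [set a | Nset n s a] \subset setX [set b | Sw n d s b] [set: R].
  apply/subsetP => x /imsetP [a]; rewrite inE => ha ->.
  rewrite !inE andbT /Sw.
  apply: leq_trans ha; apply: leq_sum => i _.
  by rewrite phiE mulnC leq_trunc_div.
apply: leq_trans (subset_leq_card sub) _.
by rewrite cardsX cardsT cR cardsE mulnC.
Qed.

Lemma ffact_lb j z : (z.+1 ^ j <= (z + j) ^_ j)%N.
Proof.
elim: j => [|j IH]; first by rewrite expn0 ffactn0.
rewrite expnS addnS ffactnS /=.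
apply: leq_mul; first by rewrite ltnS leq_addr.
exact: IH.
Qed.


Lemma binom_term k j D : (j <= k)%N -> ('C(k, j) * D ^ (k - j) <= (D + 1) ^ k)%N.
Proof.
move=> ljk.
have ljk' : (j < k.+1)%N by [].
rewrite expnDn (bigD1 (Ordinal ljk')) //= exp1n muln1; exact: leq_addr.
Qed.

Lemma leq_expr m n e : (m <= n)%N -> (m ^ e <= n ^ e)%N.
Proof. by move=> h; elim: e => // e IH; rewrite !expnS leq_mul. Qed.

Lemma exp_poly m D e n : (0 < D)%N ->
  (forall k, m ^ k <= D ^ k * (k * e + 1) ^ n)%N -> (m <= D)%N.
Proof.
move=> D0 H; rewrite leqNgt; apply/negP => ltDm.
pose E := ((n.+1) * e + 1)%N.
pose C := ((n.+1)`! * D ^ n.+1 * E ^ n)%N.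
pose z := C.
pose k := (n.+1 + z)%N.
have h1 : ((D + 1) ^ k <= D ^ k * (k * e + 1) ^ n)%N.
  apply: leq_trans (H k); apply: leq_expr; by rewrite addn1.
have h2 := binom_term D (leq_addr z n.+1 : (n.+1 <= k)%N).
have h3 := leq_trans h2 h1.
have hk : D ^ k = (D ^ (k - n.+1) * D ^ n.+1)%N by rewrite -expnD subnK // leq_addr.
rewrite hk -!mulnA [X in (X <= _)%N]mulnC leq_pmul2l ?expn_gt0 ?D0 // in h3.
have h4 : ((z.+1) ^ n.+1 <= (n.+1)`! * 'C(k, n.+1))%N.
  rewrite mulnC bin_ffact /k addnC; exact: ffact_lb.
have h5 : (k * e + 1 <= z.+1 * E)%N.
  rewrite /k /E; nia.
have h6 : ((z.+1) ^ n.+1 <= C * z.+1 ^ n)%N.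
  apply: leq_trans h4 _.
  apply: leq_trans (leq_mul (leqnn _) h3) _.
  rewrite /C mulnA -[X in (_ <= X)%N]mulnA -expnMn.
  apply: leq_mul => //; apply: leq_expr; by rewrite [E * _]mulnC.
rewrite expnS leq_pmul2r ?expn_gt0 // in h6.
by rewrite /z ltnn in h6.
Qed.

Lemma box_card n s : #|box n s| = (s.+1 ^ n)%N.
Proof. by rewrite card_ffun !card_ord. Qed.

Lemma Sw0 n (d : 'I_n -> nat) : (0 < #|Sw n d 0|)%N.
Proof.
apply/card_gt0P; exists [ffun => ord0]; rewrite /Sw /=.
rewrite unfold_in /= big1 // => i _; by rewrite ffunE muln0.
Qed.

Lemma final_count n (d : 'I_n -> nat) m e : (forall i, 0 < d i)%N ->
  (forall t, m * #|Sw n d t| <= #|Nset n (t + e)|)%N -> (m <= \prod_i d i)%N.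
Proof.
move=> hd H.
have D0 : (0 < \prod_i d i)%N by rewrite prodn_gt0.
apply: (exp_poly (e := e) (n := n) D0) => k.
have step : forall k, (m ^ k * #|Sw n d 0| <= (\prod_i d i) ^ k * #|Sw n d (k * e)|)%N.
  elim=> [|j IH]; first by rewrite !expn0.
  rewrite expnS -mulnA; apply: leq_trans (leq_mul (leqnn m) IH) _.
  rewrite mulnCA; apply: leq_trans (leq_mul (leqnn _) (H _)) _.
  rewrite expnS -mulnA mulnCA; apply: leq_mul => //.
  by rewrite mulSnr; apply: block.
apply: leq_trans (leq_trans _ (step k)) _.
  by rewrite -{1}[(m ^ k)%N]muln1 leq_mul2l Sw0 orbT.
apply: leq_mul => //; apply: leq_trans (max_card _) _.
by rewrite box_card addn1.
Qed.

Local Open Scope ring_scope.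
Lemma frac_repr (R : idomainType) (x : {fraction R}) :
  exists a b : R, b != 0 /\ x * tofrac b = tofrac a.
Proof.
elim/quotW: x => r.
exists (\n_r), (\d_r); split; first exact: denom_ratioP.
unlock tofrac; rewrite !piE.
apply/eqmodP; rewrite /= FracField.equivfE /FracField.mulf.
have hd := denom_ratioP r.
rewrite !numden_Ratio ?oner_neq0 ?mulf_neq0 ?oner_neq0 //.
by rewrite !mulr1 mulrC.
Qed.

Lemma common_den (R : idomainType) (I : finType) (v : I -> {fraction R}) :
  exists2 d : R, d != 0 & forall i, exists c, v i * tofrac d = tofrac c.
Proof.
have : forall i, exists ab : R * R, ab.2 != 0 /\ v i * tofrac ab.2 = tofrac ab.1.
  by move=> i; have [a [b [? ?]]] := frac_repr (v i); exists (a, b).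
case/fin_all_exists=> ab Hab.
exists (\prod_i (ab i).2).
  by rewrite prodf_seq_neq0; apply/allP => i _; case: (Hab i).
move=> i; exists ((ab i).1 * \prod_(j | j != i) (ab j).2).
rewrite (bigD1 i) //= rmorphM /= mulrA; case: (Hab i) => _ ->.
by rewrite tofracM.
Qed.

Lemma rank_bound (K : idomainType) (I J : finType) (A : I -> J -> K) :
  (forall c : I -> K, (forall j, \sum_i c i * A i j = 0) -> forall i, c i = 0) ->
  (#|I| <= #|J|)%N.
Proof.
move=> Hind; rewrite leqNgt; apply/negP => ltJI.
pose M : 'M[{fraction K}]_(#|I|, #|J|) :=
  \matrix_(i, j) tofrac (A (enum_val i) (enum_val j)).
have rk : (0 < \rank (kermx M))%N.
  rewrite mxrank_ker subn_gt0; exact: leq_ltn_trans (rank_leq_col M) ltJI.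
have v0 : nz_row (kermx M) != 0 by rewrite nz_row_eq0 -mxrank_eq0 -lt0n.
set v := nz_row (kermx M) in v0.
have vM : v *m M = 0 by apply/sub_kermxP; apply: nz_row_sub.
have [d d0 Hc] := common_den (fun i => v 0 i).
have [c Hc'] := fin_all_exists Hc.
have c0 : forall j, \sum_i c (enum_rank i) * A i j = 0.
  move=> j.
  have e : \sum_(i < #|I|) v ord0 i * M i (enum_rank j) * tofrac d = 0.
    have := congr1 (fun m : 'M_(1, #|J|) => m ord0 (enum_rank j) * tofrac d) vM.
    by rewrite !mxE big_distrl /= mul0r.
  apply/eqP; rewrite -tofrac_eq0 rmorph_sum /= (reindex _ (onW_bij _ (@enum_val_bij I))) /=.
  apply/eqP; apply: etrans e; apply: eq_bigr => i _.
  rewrite enum_valK tofracM -Hc' !mxE mulrAC.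
  by rewrite enum_rankK.
have := Hind _ c0 => Hz.
move/eqP: v0; apply; apply/rowP => i; rewrite mxE.
have := Hc' i; rewrite -(enum_valK i) Hz tofrac0 => /eqP.
by rewrite mulf_eq0 tofrac_eq0 (negbTE d0) orbF enum_valK => /eqP.
Qed.

Lemma tdeg0 (K : idomainType) n : tdeg (0 : {mpoly K[n]}) = 0%N.
Proof. by rewrite /tdeg msize0. Qed.

Lemma tdegM (K : idomainType) n (p q : {mpoly K[n]}) :
  (tdeg (p * q) <= tdeg p + tdeg q)%N.
Proof.
have [->|p0] := eqVneq p 0; first by rewrite mul0r tdeg0.
have [->|q0] := eqVneq q 0; first by rewrite mulr0 tdeg0.
rewrite /tdeg msizeM //.
have : msize p != 0%N by rewrite msize_poly_eq0.
have : msize q != 0%N by rewrite msize_poly_eq0.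
lia.
Qed.

Lemma tdeg_prod (K : idomainType) n (I : finType) (f : I -> {mpoly K[n]}) (g : I -> nat) :
  (forall i, tdeg (f i) <= g i)%N -> (tdeg (\prod_i f i) <= \sum_i g i)%N.
Proof.
move=> H; apply: (big_ind2 (fun p k => tdeg p <= k)%N).
- by rewrite /tdeg msize1.
- by move=> p1 k1 p2 k2 h1 h2; apply: leq_trans (tdegM _ _) (leq_add h1 h2).
- by move=> i _; apply: H.
Qed.

Lemma tdegX (K : idomainType) n (p : {mpoly K[n]}) k : (tdeg (p ^+ k) <= k * tdeg p)%N.
Proof.
elim: k => [|k IH]; first by rewrite expr0 /tdeg msize1.
by rewrite exprS mulSn; apply: leq_trans (tdegM _ _) (leq_add (leqnn _) IH).
Qed.

Lemma tdeg_coef0 (K : idomainType) n (p : {mpoly K[n]}) mm :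
  (tdeg p < mdeg mm)%N -> p@_mm = 0.
Proof.
move=> h; apply: memN_msupp_eq0; apply: msize_mdeg_ge.
apply: leq_trans h; rewrite /tdeg; lia.
Qed.

Lemma tdeg_pos (K : idomainType) n (F : n.-tuple {mpoly K[n]}) :
  alg_indep F -> forall i, (0 < tdeg (tnth F i))%N.
Proof.
move=> hind i; rewrite lt0n; apply/negP => /eqP h.
have hs : (msize (tnth F i) <= 1)%N by move: h; rewrite /tdeg; lia.
have hc := msize1_polyC hs.
set c := (tnth F i)@_0 in hc.
have : ('X_i - c%:MP : {mpoly K[n]}) \mPo F = 0.
  by rewrite comp_mpolyB comp_mpolyXU comp_mpolyC -tnth_nth -hc subrr.
move/hind/eqP; rewrite subr_eq0 => /eqP e.
have := congr1 (mcoeff (mnm1 i)) e.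
rewrite mcoeffXU eqxx mcoeffC.
have -> : ((mnm1 i) == 0%MM) = false.
  by apply/negbTE; apply/eqP => h0; have := congr1 mdeg h0; rewrite mdeg1 mdeg0.
by rewrite mulr0 => /eqP; rewrite oner_eq0.
Qed.


Lemma KP_of_indep (K : idomainType) n (F : n.-tuple {mpoly K[n]}) m
  (x : 'I_m -> fracB K n) (d0 : {mpoly K[n]}) (y : 'I_m -> {mpoly K[n]}) :
  lin_indep_over (in_fracA F) x -> alg_indep F -> d0 != 0 ->
  (forall j, x j * tofrac d0 = tofrac (y j)) ->
  forall P : 'I_m -> {mpoly K[n]}, \sum_j (P j \mPo F) * y j = 0 -> forall j, P j = 0.
Proof.
move=> li hind d00 hy P hP j.
pose c j := tofrac (P j \mPo F).
have Mc : forall j, in_fracA F (c j).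
  move=> k; exists (P k \mPo F), 1; split.
  - by exists (P k).
  - by exists 1; rewrite comp_mpoly1.
  - exact: oner_neq0.
  - by rewrite tofrac1 divr1.
have hs : \sum_j c j * x j = 0.
  have dn0 : tofrac d0 != 0 by rewrite tofrac_eq0.
  apply: (mulIf dn0); rewrite mul0r big_distrl /=.
  rewrite (eq_bigr (fun j => tofrac ((P j \mPo F) * y j))); last first.
    by move=> k _; rewrite -mulrA hy /c tofracM.
  by rewrite -rmorph_sum /= hP tofrac0.
have := li c Mc hs j; move/eqP; rewrite tofrac_eq0 => /eqP /hind.
done.
Qed.

Lemma claim1 (K : idomainType) n (F : n.-tuple {mpoly K[n]}) m (y : 'I_m -> {mpoly K[n]}) e t :
  (forall P : 'I_m -> {mpoly K[n]}, \sum_j (P j \mPo F) * y j = 0 -> forall j, P j = 0) ->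
  (forall j, tdeg (y j) <= e)%N ->
  (m * #|Sw n (fun i => tdeg (tnth F i)) t| <= #|Nset n (t + e)|)%N.
Proof.
move=> KP hy.
set d := (fun i => tdeg (tnth F i)).
pose mnm s (a : box n s) : 'X_{1..n} := [multinom (a i : nat) | i < n].
have mnm_inj s : injective (@mnm s).
  move=> a1 a2 h; apply/ffunP => i; apply: val_inj.
  by have := congr1 (fun mm : 'X_{1..n} => mm i) h; rewrite /mnm !mnmE.
have mdeg_mnm s (a : box n s) : mdeg (mnm s a) = (\sum_i a i)%N.
  by rewrite mdegE; apply: eq_bigr => i _; rewrite mnmE.
pose I : finType := ('I_m * {b : box n t | Sw n d t b})%type.
pose J : finType := {a : box n (t + e) | Nset n (t + e) a}.
pose G (p : I) := ('X_[mnm t (val p.2)] \mPo F) * y p.1.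
have tdegG p : (tdeg (G p) <= t + e)%N.
  apply: leq_trans (tdegM _ _) _; apply: leq_add; last exact: hy.
  rewrite comp_mpolyX.
  apply: leq_trans (tdeg_prod (g := fun i => (val p.2 i) * d i)%N _) _.
    by move=> i; rewrite mnmE; apply: tdegX.
  case: p => j [b hb] /=; apply: leq_trans hb; apply: eq_leq; apply: eq_bigr => i _; by rewrite mulnC.
have cI : #|I| = (m * #|Sw n d t|)%N by rewrite card_prod card_ord card_sig.
have cJ : #|J| = #|Nset n (t + e)| by rewrite card_sig.
rewrite -cI -cJ.
apply: (rank_bound (A := fun (p : I) (a : J) => (G p)@_(mnm _ (val a)))).
move=> c hc.
pose P j := \sum_(b : {b : box n t | Sw n d t b}) c (j, b) *: 'X_[mnm t (val b)].
have HQ : \sum_j (P j \mPo F) * y j = 0.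
  apply/mpolyP => mm; rewrite mcoeff0.
  have -> : (\sum_j (P j \mPo F) * y j)@_mm = \sum_(p : I) c p * (G p)@_mm.
    rewrite [RHS](eq_bigr (fun p : I => c (p.1, p.2) * (G (p.1, p.2))@_mm)); last by case.
    rewrite -(pair_big xpredT xpredT (fun j b => c (j, b) * (G (j, b))@_mm)) /=.
    rewrite raddf_sum /=; apply: eq_bigr => j _.
    rewrite /P raddf_sum /= mulr_suml raddf_sum /=; apply: eq_bigr => b _.
    by rewrite comp_mpolyZ -scalerAl mcoeffZ.
  have [le|gt] := leqP (mdeg mm) (t + e).
    pose a : box n (t + e) := [ffun i => inord (mm i)].
    have ma : mnm _ a = mm.
      apply/mnmP => i; rewrite mnmE ffunE inordK // ltnS.
      by apply: leq_trans le; rewrite mdegE (bigD1 i) //= leq_addr.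
    have ha : Nset n (t + e) a by rewrite /Nset -mdeg_mnm ma.
    by have := hc (exist _ a ha); rewrite /= ma.
  by rewrite big1 // => p _; rewrite tdeg_coef0 ?mulr0 // (leq_ltn_trans (tdegG p) gt).
case=> j b.
have := KP P HQ j => /(congr1 (mcoeff (mnm t (val b)))).
rewrite mcoeff0 /P raddf_sum (bigD1 b) //= mcoeffZ mcoeffX eqxx mulr1 big1 ?addr0 //.
move=> b' nb; rewrite mcoeffZ mcoeffX.
have /negbTE -> : mnm t (val b') != mnm t (val b).
  by rewrite (inj_eq (@mnm_inj t)) val_eqE.
by rewrite mulr0.
Qed.

Theorem mainTheorem4 (K : idomainType) (n : nat) (F : n.-tuple {mpoly K[n]}) :
  (0 < n)%N -> alg_indep F ->
  sep_degree_le (in_fracA F) (\prod_(i < n) tdeg (tnth F i))%N.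
Proof.
move=> hn hind m x _ li.
have hd := tdeg_pos hind.
have [d0 d00 hc] := common_den x.
have [y hy] := fin_all_exists hc.
have KP := KP_of_indep li hind d00 hy.
pose e := (\max_j tdeg (y j))%N.
apply: (final_count (e := e) hd) => t.
apply: claim1 KP _ => j; exact: leq_bigmax.
Qed.
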